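(* For $n\geq 1$, let $B_n(y,t)=\sum_{\sigma\in\mathcal{B}_n}y^{\mathsf{neg}\,\sigma}t^{\mathsf{des}_B\,\sigma}$. Then $$B_n(y, t)=(1+yt)^nP^{(\mathsf{cpk}, \mathsf{exc})}\left(\mathfrak{S}_n; \frac{(1+y)^2t}{(y+t)(1+yt)}, \frac{y+t}{1+yt}\right),$$ equivalently, $$P^{(\mathsf{cpk},\mathsf{exc})}\left(\mathfrak{S}_n; y,t\right)=\frac{1}{(1+uv)^{n}}B_{n}(u,v),$$ where $u=\frac{1+t^{2}-2yt-(1-t)\sqrt{(1+t)^{2}-4yt}}{2(1-y)t}$ and $v=\frac{(1+t)^{2}-2yt-(1+t)\sqrt{(1+t)^{2}-4yt}}{2yt}$.
   Context: $\mathcal{B}_n$ is the set of permutations $\sigma$ of $\{\pm1,\dots,\pm n\}$ with $\sigma(-i)=-\sigma(i)$; $\mathsf{neg}\,\sigma=\#\{i\in[n]:\sigma(i)<0\}$; $\mathsf{des}_B\,\sigma=\#\{i\in\{0,\dots,n-1\}:\sigma(i)>\sigma(i+1)\}$ with $\sigma(0)=0$ and the natural order. $\mathfrak{S}_n$ is the set of permutations of $[n]$; $P^{(\mathsf{cpk},\mathsf{exc})}(\mathfrak{S}_n;a,b)=\sum_{\sigma\in\mathfrak{S}_n}a^{\mathsf{cpk}\,\sigma}b^{\mathsf{exc}\,\sigma}$, where $\mathsf{exc}\,\sigma=\#\{i:\sigma(i)>i\}$ and $\mathsf{cpk}\,\sigma=\#\{x\in[n]:\sigma^{-1}(x)<x>\sigma(x)\}$.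 *)

(* Defs.v *)
From mathcomp Require Import all_boot all_order all_fingroup all_algebra.
Set Implicit Arguments. Unset Strict Implicit. Unset Printing Implicit Defensive.
Import Order.TTheory GRing.Theory Num.Theory.
Local Open Scope ring_scope.

(* The set {+-1,...,+-n} is encoded by the finite type
   [bool * 'I_n]: the element (b, i) stands for the integer
   (if b then -(i+1) else i+1). *)
Definition sval n (x : bool * 'I_n) : int :=
  if x.1 then - (x.2.+1 : nat)%:Z else (x.2.+1 : nat)%:Z.

Definition sneg n (x : bool * 'I_n) : bool * 'I_n := (~~ x.1, x.2).

Definition signed_perms n : {set {perm (bool * 'I_n)}} :=
  [set s : {perm (bool * 'I_n)} | [forall x, s (sneg x) == sneg (s x)]].

Definition sigma_at n (s : {perm (bool * 'I_n)}) (i : 'I_n) : int :=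
  sval (s (false, i)).

Definition negB n (s : {perm (bool * 'I_n)}) : nat :=
  #|[set i : 'I_n | sigma_at s i < 0]|.

Definition sword n (s : {perm (bool * 'I_n)}) : seq int :=
  0 :: [seq sigma_at s i | i <- enum 'I_n].

Definition desB n (s : {perm (bool * 'I_n)}) : nat :=
  \sum_(i < n) (nth 0 (sword s) i.+1 < nth 0 (sword s) i)%R.

Definition Bpoly (R : comPzRingType) n (y t : R) : R :=
  \sum_(s in signed_perms n) y ^+ negB s * t ^+ desB s.

(* Ordinary permutations of [n], encoded as 'S_n acting on 'I_n = {0..n-1};
   exc and cpk are invariant under the shift i |-> i+1. *)
Definition exc n (s : 'S_n) : nat := #|[set i : 'I_n | (i < s i)%N]|.
Definition cpk n (s : 'S_n) : nat :=
  #|[set x : 'I_n | (((s^-1)%g x < x)%N && (s x < x)%N)]|.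

Definition Pcpkexc (R : comPzRingType) n (a b : R) : R :=
  \sum_(s : 'S_n) a ^+ cpk s * b ^+ exc s.

(* Main.v *)
Require Import Defs.
From mathcomp Require Import all_boot all_order all_fingroup all_algebra.
From mathcomp Require Import ring zify.
Set Implicit Arguments. Unset Strict Implicit. Unset Printing Implicit Defensive.
Import Order.TTheory GRing.Theory Num.Theory.
Local Open Scope ring_scope.


Lemma card_set_sum (T : finType) (P : pred T) : #|[set x | P x]| = (\sum_x (P x : nat))%N.
Proof.
rewrite -sum1_card big_mkcond /=; apply: eq_bigr => i _; rewrite inE; by case: (P i).
Qed.

Lemma sum_bij (T1 T2 : finType) (V : nmodType) (f : T1 -> T2) (F : T2 -> V) :
  injective f -> (#|T2| <= #|T1|)%N -> \sum_(x : T2) F x = \sum_(y : T1) F (f y).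
Proof.
move=> fi hc; have bf := inj_card_bij fi hc.
by rewrite (reindex f) //; exact: onW_bij.
Qed.

Lemma widen_lift n (i : 'I_n) : widen_ord (leqnSn n) i = lift ord_max i.
Proof. apply: val_inj; rewrite /= /bump leqNgt ltn_ord. by []. Qed.

Definition Lp n (s : 'S_n) : 'S_n.+1 := lift_perm ord_max ord_max s.
Definition cins n (k : 'I_n.+1) (s : 'S_n) : 'S_n.+1 := (tperm k ord_max * Lp s)%g.

Lemma Lp_lift n (s : 'S_n) i : Lp s (lift ord_max i) = lift ord_max (s i).
Proof. exact: lift_perm_lift. Qed.
Lemma Lp_max n (s : 'S_n) : Lp s ord_max = ord_max.
Proof. exact: lift_perm_id. Qed.
Lemma LpV n (s : 'S_n) : ((Lp s)^-1)%g = Lp (s^-1)%g.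
Proof. exact: lift_permV. Qed.

Lemma cins_inj n : injective (fun z : 'I_n.+1 * 'S_n => cins z.1 z.2).
Proof.
move=> [k s] [k' s'] /= E.
have Ek : k = k'.
  have h1 : cins k s k = ord_max by rewrite /cins permM tpermL Lp_max.
  have h2 : cins k' s' k' = ord_max by rewrite /cins permM tpermL Lp_max.
  by apply: (@perm_inj _ (cins k s)); rewrite h1 E h2.
subst k'; congr (_, _).
have : Lp s = Lp s'.
  by move: E; rewrite /cins => /(congr1 (fun x => tperm k ord_max * x)%g); rewrite !mulgA tperm2 !mul1g.
move=> E2; apply/permP => i; apply: (@lift_inj _ ord_max).
by rewrite -!Lp_lift E2.
Qed.

Lemma sum_cins n (V : nmodType) (F : 'S_n.+1 -> V) :
  \sum_(s : 'S_n.+1) F s = \sum_(s : 'S_n) \sum_(k : 'I_n.+1) F (cins k s).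
Proof.
rewrite (sum_bij F (@cins_inj n)); last by rewrite card_prod !card_Sn card_ord factS.
rewrite -(pair_big xpredT xpredT (fun k s => F (cins k s))) /=; exact: exchange_big.
Qed.

Definition excs n (s : 'S_n) : nat := (\sum_(i : 'I_n) (i < s i)%N)%N.
Definition iscpk n (s : 'S_n) (x : 'I_n) : bool := ((s^-1)%g x < x)%N && (s x < x)%N.
Definition cpks n (s : 'S_n) : nat := (\sum_(x : 'I_n) iscpk s x)%N.

Lemma excE n (s : 'S_n) : exc s = excs s.
Proof. by rewrite /exc card_set_sum. Qed.
Lemma cpkE n (s : 'S_n) : cpk s = cpks s.
Proof. by rewrite /cpk card_set_sum. Qed.

Lemma cins_max n (s : 'S_n) : cins ord_max s = Lp s.
Proof. by rewrite /cins tperm1 mul1g. Qed.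

Lemma excs_Lp n (s : 'S_n) : excs (Lp s) = excs s.
Proof.
rewrite /excs big_ord_recr /= Lp_max ltnn addn0; apply: eq_bigr => i _.
by rewrite widen_lift Lp_lift !lift_max.
Qed.

Lemma cpks_Lp n (s : 'S_n) : cpks (Lp s) = cpks s.
Proof.
rewrite /cpks big_ord_recr /= /iscpk LpV !Lp_max ltnn andbF addn0; apply: eq_bigr => i _.
by rewrite widen_lift !Lp_lift !lift_max.
Qed.

Lemma cins_lift n (s : 'S_n) k0 i :
  cins (lift ord_max k0) s (lift ord_max i) = if i == k0 then ord_max else lift ord_max (s i).
Proof.
rewrite /cins permM; case: eqP => [->|/eqP ne]; first by rewrite tpermL Lp_max.
by rewrite tpermD ?Lp_lift ?neq_lift // (inj_eq (@lift_inj _ _)) eq_sym.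
Qed.

Lemma cins_liftmax n (s : 'S_n) k0 : cins (lift ord_max k0) s ord_max = lift ord_max (s k0).
Proof. by rewrite /cins permM tpermR Lp_lift. Qed.

Lemma cinsV_lift n (s : 'S_n) k0 i :
  ((cins (lift ord_max k0) s)^-1)%g (lift ord_max i) =
  if (s^-1)%g i == k0 then ord_max else lift ord_max ((s^-1)%g i).
Proof.
rewrite /cins invMg tpermV LpV permM Lp_lift; case: eqP => [->|/eqP ne]; first by rewrite tpermL.
by rewrite tpermD ?neq_lift // (inj_eq (@lift_inj _ _)) eq_sym.
Qed.

Lemma cinsV_max n (s : 'S_n) k0 :
  ((cins (lift ord_max k0) s)^-1)%g ord_max = lift ord_max k0.
Proof. by rewrite /cins invMg tpermV LpV permM Lp_max tpermR. Qed.

Lemma excs_cins n (s : 'S_n) k0 :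
  (excs (cins (lift ord_max k0) s) + (k0 < s k0) = excs s + 1)%N.
Proof.
rewrite /excs big_ord_recr /= cins_liftmax lift_max ltnNge ltnW //= addn0.
rewrite (bigD1 k0) //= [X in (_ = X + _)%N](bigD1 k0) //=.
rewrite !widen_lift cins_lift eqxx /= ltn_ord.
under eq_bigr => i /negbTE ne do rewrite widen_lift cins_lift ne lift_max.
by rewrite addnAC [RHS]addnC [RHS]addnA.
Qed.

Lemma sum_ind (T : finType) (a : T) (c : nat) : (\sum_x ((x == a) * c) = c)%N.
Proof. by rewrite (bigD1 a) //= eqxx mul1n big1 ?addn0 // => x /negbTE ->. Qed.

Lemma sum_two (T : finType) (P : pred T) a b : (a == b -> ~~ P a) ->
  (\sum_x [&& x != b, x != a & P x] + P a + P b = \sum_x P x)%N.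
Proof.
move=> hab.
have E : forall x, (P x : nat) = ([&& x != b, x != a & P x] + (x == a) * P a + (x == b) * P b)%N.
  move=> x; case: (eqVneq x a) => [->|nea]; case: (eqVneq a b) => [eab|neab].
  - by subst b; move: (hab (eqxx _)) => /negbTE ->.
  - by case: (P a).
  - by case: (eqVneq x b) => [->|] /=; case: (P _).
  - by case: (eqVneq x b) => [->|] /=; rewrite ?muln0 ?addn0 ?mul1n; case: (P _).
rewrite (eq_bigr _ (fun x _ => E x)) !big_split /= !sum_ind //.
Qed.

Lemma iscpk_cins n (s : 'S_n) k0 i :
  iscpk (cins (lift ord_max k0) s) (lift ord_max i) = [&& i != s k0, i != k0 & iscpk s i].
Proof.
rewrite /iscpk cinsV_lift cins_lift.
have -> : ((s^-1)%g i == k0) = (i == s k0).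
  by apply/eqP/eqP => [<-|->]; rewrite ?permKV ?permK.
have bi : forall j : 'I_n, bump n j = j by move=> j; rewrite /bump leqNgt ltn_ord.
case: (i == s k0) => /=; rewrite !bi; first by rewrite ltnNge ltnW.
case: (i == k0) => /=; first by rewrite andbC ltnNge ltnW.
by rewrite bi.
Qed.

Lemma cpks_cins n (s : 'S_n) k0 :
  (cpks (cins (lift ord_max k0) s) + iscpk s k0 + iscpk s (s k0) = cpks s + 1)%N.
Proof.
rewrite /cpks big_ord_recr /=.
have -> : iscpk (cins (lift ord_max k0) s) ord_max = true.
  by rewrite /iscpk cinsV_max cins_liftmax !lift_max !ltn_ord.
under eq_bigr => i _ do rewrite widen_lift iscpk_cins.
rewrite -(sum_two (P := iscpk s) (a := k0) (b := s k0));  last first.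
  by move=> /eqP E; rewrite /iscpk -E ltnn andbF.
rewrite -!addnA; congr (_ + _)%N; lia.
Qed.


Definition pp (R : comNzRingType) (y : R) : {poly R} := (1 + y%:P) ^+ 2 * 'X.
Definition qq (R : comNzRingType) (y : R) : {poly R} := y%:P + 'X.
Definition rr (R : comNzRingType) (y : R) : {poly R} := 1 + y%:P * 'X.
Definition Op (R : comNzRingType) (y : R) (n : nat) (F : {poly R}) : {poly R} :=
  (1 + (n%:R * (1 + y%:P) + y%:P) * 'X) * F + (1 + y%:P) * (1 - 'X) * ('X * F^`()).

Lemma Op_sum (R : comNzRingType) (y : R) n (I : finType) (F : I -> {poly R}) :
  Op y n (\sum_i F i) = \sum_i Op y n (F i).
Proof.
rewrite /Op raddf_sum mulr_sumr mulr_sumr mulr_sumr -big_split /=; apply: eq_bigr => i _.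
done.
Qed.

Lemma Xderiv_exp (R : comNzRingType) (p : {poly R}) a :
  'X * (p ^+ a)^`() = a%:R * ('X * p^`()) * p ^+ a.-1.
Proof. by rewrite deriv_exp -mulr_natl; ring. Qed.

Lemma poly_ident (R : comNzRingType) (y : R) (a b c : nat) :
  let p := pp y in let q := qq y in let r := rr y in
  a%:R * (p ^+ a * q ^+ b.+1 * r ^+ c) + a%:R * (p ^+ a * q ^+ b * r ^+ c.+1)
  + b%:R * (p ^+ a.+1 * q ^+ b.-1 * r ^+ c) + c%:R * (p ^+ a.+1 * q ^+ b * r ^+ c.-1)
  + p ^+ a * q ^+ b * r ^+ c.+1
  = Op y (a + a + b + c) (p ^+ a * q ^+ b * r ^+ c).
Proof.
move=> p q r.
have dp : 'X * p^`() = p by rewrite /p /pp derivM derivX deriv_exp !derivE; ring.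
have dq : 'X * q^`() = 'X by rewrite /q /qq !derivE; ring.
have dr : 'X * r^`() = y%:P * 'X by rewrite /r /rr !derivE; ring.
have ea : 'X * (p ^+ a)^`() = a%:R * p ^+ a.
  rewrite Xderiv_exp dp; case: a => [|a]; first by rewrite !mul0r.
  by rewrite exprS /=; ring.
have eb : 'X * (q ^+ b)^`() = b%:R * 'X * q ^+ b.-1.
  by rewrite Xderiv_exp dq.
have ec : 'X * (r ^+ c)^`() = c%:R * (y%:P * 'X) * r ^+ c.-1.
  by rewrite Xderiv_exp dr.
rewrite /Op.
have -> : 'X * (p ^+ a * q ^+ b * r ^+ c)^`() =
   ('X * (p ^+ a)^`()) * q ^+ b * r ^+ c + p ^+ a * ('X * (q ^+ b)^`()) * r ^+ c
   + p ^+ a * q ^+ b * ('X * (r ^+ c)^`()) by rewrite !derivM; ring.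
rewrite ea eb ec !natrD; clear ea eb ec.
case: b => [|b]; case: c => [|c] /=; rewrite ?mul0r ?addr0 ?exprS /p /q /r /pp /qq /rr; ring.
Qed.

Definition Wt (R : comNzRingType) (y : R) (a e m : nat) : {poly R} :=
  pp y ^+ a * qq y ^+ (e - a) * rr y ^+ (m - e - a).

Lemma cpk_exc_rel n (s : 'S_n) k : iscpk s k -> (s k < k)%N.
Proof. by case/andP. Qed.
Lemma cpk_exc_rel2 n (s : 'S_n) k : iscpk s (s k) -> (k < s k)%N.
Proof. by case/andP; rewrite permK. Qed.

Lemma sum_cpk_s n (s : 'S_n) : (\sum_k (iscpk s (s k) : nat))%N = cpks s.
Proof. by rewrite /cpks [RHS](reindex_inj (@perm_inj _ s)). Qed.

Lemma cpks_le n (s : 'S_n) : (cpks s <= excs s)%N.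
Proof.
rewrite -sum_cpk_s /excs; apply: leq_sum => k _.
by case: (boolP (iscpk s (s k))) => // /cpk_exc_rel2 ->.
Qed.

Lemma cpks_exc n (s : 'S_n) : (cpks s + excs s <= n)%N.
Proof.
rewrite /cpks /excs -big_split /=.
rewrite -[X in (_ <= X)%N]card_ord -sum1_card; apply: leq_sum => k _.
case: (boolP (iscpk s k)) => [/cpk_exc_rel h|]; last by case: (k < s k)%N.
by rewrite ltnNge (ltnW h).
Qed.

Lemma sum_cins_W (R : comNzRingType) (y : R) n (s : 'S_n) :
  \sum_(k : 'I_n.+1) Wt y (cpks (cins k s)) (excs (cins k s)) n.+1
  = Op y n (Wt y (cpks s) (excs s) n).
Proof.
have ha := cpks_le s; have he := cpks_exc s.
set a := cpks s in ha he *; set e := excs s in ha he *.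
set b := (e - a)%N; set c := (n - e - a)%N.
have nE : n = (a + a + b + c)%N by rewrite /b /c; lia.
have eE : e = (a + b)%N by rewrite /b; lia.
set p := pp y; set q := qq y; set r := rr y.
pose A1 := p ^+ a * q ^+ b.+1 * r ^+ c.
pose A2 := p ^+ a * q ^+ b * r ^+ c.+1.
pose A3 := p ^+ a.+1 * q ^+ b.-1 * r ^+ c.
pose A4 := p ^+ a.+1 * q ^+ b * r ^+ c.-1.
have key : forall k0 : 'I_n, Wt y (cpks (cins (lift ord_max k0) s)) (excs (cins (lift ord_max k0) s)) n.+1
   = (iscpk s k0 : nat)%:R * A1 + (iscpk s (s k0) : nat)%:R * A2
     + (((k0 < s k0)%N : nat)%:R - (iscpk s (s k0) : nat)%:R) * A3
     + (1 - ((k0 < s k0)%N : nat)%:R - (iscpk s k0 : nat)%:R) * A4.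
  move=> k0; have h1 := cpks_cins s k0; have h2 := excs_cins s k0.
  have c1 : iscpk s k0 -> ~~ (k0 < s k0)%N by move/cpk_exc_rel => h; rewrite ltnNge (ltnW h).
  have c2 := @cpk_exc_rel2 n s k0.
  rewrite /Wt -/p -/q -/r.
  move: h1 h2 c1 c2; rewrite -/a -/e.
  case: (iscpk s k0); case: (iscpk s (s k0)); case: (k0 < s k0)%N => //= h1 h2 c1 c2;
    try first [by have := c1 isT | by have := c2 isT].
  - have -> : cpks (cins (lift ord_max k0) s) = a by lia.
    have -> : excs (cins (lift ord_max k0) s) = e.+1 by lia.
    have -> : (n.+1 - e.+1 - a = c)%N by rewrite /c; lia.
    have -> : (e.+1 - a = b.+1)%N by rewrite /b; lia.
    rewrite /A1 /A2 /A3 /A4; ring.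
  - have -> : cpks (cins (lift ord_max k0) s) = a by lia.
    have -> : excs (cins (lift ord_max k0) s) = e by lia.
    have -> : (n.+1 - e - a = c.+1)%N by rewrite /c; lia.
    rewrite /A1 /A2 /A3 /A4 -/b; ring.
  - have -> : cpks (cins (lift ord_max k0) s) = a.+1 by lia.
    have -> : excs (cins (lift ord_max k0) s) = e by lia.
    have -> : (n.+1 - e - a.+1 = c)%N by rewrite /c; lia.
    have -> : (e - a.+1 = b.-1)%N by rewrite /b; lia.
    rewrite /A1 /A2 /A3 /A4; ring.
  - have -> : cpks (cins (lift ord_max k0) s) = a.+1 by lia.
    have -> : excs (cins (lift ord_max k0) s) = e.+1 by lia.
    have -> : (n.+1 - e.+1 - a.+1 = c.-1)%N by rewrite /c; lia.
    have -> : (e.+1 - a.+1 = b)%N by rewrite /b; lia.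
    rewrite /A1 /A2 /A3 /A4; ring.
rewrite big_ord_recr /= cins_max cpks_Lp excs_Lp -/a -/e.
under eq_bigr => k0 _ do rewrite widen_lift key.
rewrite !big_split /= -!big_distrl /= !sumrB -!natr_sum sum_cpk_s -/a.
rewrite sumr_const card_ord.
rewrite -[(\sum_(i < n) ((i < s i)%N : nat))%N]/(excs s) -/e -[(\sum_(i < n) (iscpk s i : nat))%N]/(cpks s) -/a.
have -> : Wt y a e n.+1 = A2 by rewrite /Wt /A2 /c; congr (_ * _ ^+ _); lia.
have -> : Wt y a e n = p ^+ a * q ^+ b * r ^+ c by [].
rewrite [in RHS]nE -(poly_ident y a b c) -/p -/q -/r -/A1 -/A2 -/A3 -/A4.
have -> : n%:R = (a + a + b + c)%:R :> {poly R} by rewrite -nE.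
rewrite eE !natrD; ring.
Qed.


Fixpoint desc (a : int) (l : seq int) : nat :=
  if l is b :: l' then (((b < a)%R : nat) + desc b l')%N else 0%N.

Lemma desc_cat a s1 s2 : desc a (s1 ++ s2) = (desc a s1 + desc (last a s1) s2)%N.
Proof. by elim: s1 a => [|b s1 IH] a //=; rewrite IH addnA. Qed.

Lemma desc_sum a l :
  desc a l = (\sum_(j < size l) (nth 0 l j < nth 0 (a :: l) j)%R)%N.
Proof.
elim: l a => [|b l IH] a /=; first by rewrite big_ord0.
by rewrite big_ord_recl /= IH.
Qed.

Lemma last_take_nth (a : int) l j : (j <= size l)%N -> last a (take j l) = nth 0 (a :: l) j.
Proof.
case: j => [|j] hj; first by case: l hj.
by rewrite (last_nth 0) size_takel //= nth_take.
Qed.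

Lemma desc_ins (a : int) l j (x : int) : (j <= size l)%N ->
  let d := ((j < size l) && (nth 0 l j < nth 0 (a :: l) j)%R)%N in
  ((forall z, z \in a :: l -> (z < x)%R) ->
     desc a (take j l ++ x :: drop j l) + d = desc a l + (j < size l))%N /\
  ((forall z, z \in a :: l -> (x < z)%R) ->
     desc a (take j l ++ x :: drop j l) + d = desc a l + 1)%N.
Proof.
move=> hj d.
have Lm : last a (take j l) \in a :: l.
  have := mem_last a (take j l); rewrite !inE => /orP [->//|/mem_take ->]; by rewrite orbT.
have E := desc_cat a (take j l) (drop j l); rewrite cat_take_drop in E.
rewrite desc_cat E.
rewrite /d; case: (ltnP j (size l)) => hjs.
  rewrite (drop_nth 0 hjs) /= -(last_take_nth a hj).
  have zm : nth 0 l j \in a :: l by rewrite inE mem_nth ?orbT.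
  split => h.
  - by rewrite (lt_gtF (h _ Lm)) (h _ zm) /=; lia.
  - by rewrite (h _ Lm) (lt_gtF (h _ zm)) /=; lia.
rewrite drop_oversize //=; split => h.
- by rewrite (lt_gtF (h _ Lm)) /=; lia.
- by rewrite (h _ Lm) /=; lia.
Qed.

Lemma enum_lift n (j : 'I_n.+1) :
  enum 'I_n.+1 = take j (map (lift j) (enum 'I_n)) ++ j :: drop j (map (lift j) (enum 'I_n)).
Proof.
apply: (inj_map val_inj); rewrite map_cat /= map_take map_drop.
have E : map val (map (lift j) (enum 'I_n)) = map (bump j) (iota 0 n).
  by rewrite -map_comp -val_enum_ord -map_comp.
have hj : (j <= n)%N by rewrite -ltnS.
rewrite E val_enum_ord -map_take -map_drop take_iota drop_iota.
rewrite (minn_idPl hj) add0n.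
have -> : map (bump j) (iota 0 j) = iota 0 j.
  rewrite -[RHS]map_id; apply/eq_in_map => i; rewrite mem_iota /= add0n => hi.
  by rewrite /bump leqNgt hi.
have -> : map (bump j) (iota j (n - j)) = iota j.+1 (n - j).
  rewrite -(addn1 j) addnC iotaDl; apply/eq_in_map => i; rewrite mem_iota => /andP [hi _].
  by rewrite /bump hi addnC.
have E2 : n.+1 = (j + (n - j).+1)%N by lia.
by rewrite [in iota 0 n.+1]E2 iotaD add0n.
Qed.

Definition wd n (p : 'S_n) (e : {ffun 'I_n -> bool}) : seq int :=
  [seq Defs.sval (e i, p i) | i <- enum 'I_n].

Definition inse n (j : 'I_n.+1) (b : bool) (e : {ffun 'I_n -> bool}) : {ffun 'I_n.+1 -> bool} :=
  [ffun i => if unlift j i is Some m then e m else b].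

Lemma inse_j n j b (e : {ffun 'I_n -> bool}) : inse j b e j = b.
Proof. by rewrite /inse ffunE unlift_none. Qed.
Lemma inse_lift n j b (e : {ffun 'I_n -> bool}) m : inse j b e (lift j m) = e m.
Proof. by rewrite /inse ffunE liftK. Qed.

Lemma sval_val n m b (i : 'I_n) (i' : 'I_m) : (i : nat) = (i' : nat) -> Defs.sval (b, i) = Defs.sval (b, i').
Proof. by move=> E; rewrite /Defs.sval /= E. Qed.

Lemma wd_ins n (j : 'I_n.+1) b (p : 'S_n) e :
  wd (lift_perm j ord_max p) (inse j b e) =
  take j (wd p e) ++ Defs.sval (b, (ord_max : 'I_n.+1)) :: drop j (wd p e).
Proof.
rewrite /wd (enum_lift j) map_cat /= map_take map_drop -!map_comp inse_j lift_perm_id.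
congr (take _ _ ++ _ :: drop _ _); apply: eq_map => m /=;
  by rewrite inse_lift lift_perm_lift; apply: sval_val; rewrite lift_max.
Qed.

Lemma size_wd n (p : 'S_n) e : size (wd p e) = n.
Proof. by rewrite size_map size_enum_ord. Qed.

Lemma wd_bound n (p : 'S_n) e z : z \in 0 :: wd p e -> (- (n%:Z) <= z <= n%:Z)%R.
Proof.
rewrite inE => /orP [/eqP ->|/mapP [i _ ->]]; first by lia.
have hi : (p i < n)%N := ltn_ord _.
rewrite /Defs.sval /=; case: (e i) => /=; lia.
Qed.

Definition negs n (e : {ffun 'I_n -> bool}) : nat := (\sum_i (e i : nat))%N.

Lemma negs_ins n j b (e : {ffun 'I_n -> bool}) : negs (inse j b e) = (b + negs e)%N.
Proof.
rewrite /negs (bigD1_ord j) //= inse_j; congr (_ + _)%N; apply: eq_bigr => i _.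
by rewrite inse_lift.
Qed.

Definition insw n (z : ('I_n.+1 * bool) * ('S_n * {ffun 'I_n -> bool})) :
  'S_n.+1 * {ffun 'I_n.+1 -> bool} :=
  (lift_perm z.1.1 ord_max z.2.1, inse z.1.1 z.1.2 z.2.2).

Lemma insw_inj n : injective (@insw n).
Proof.
move=> [[j b] [p e]] [[j' b'] [p' e']] [] /= E1 E2.
have Ej : j = j'.
  apply: (@perm_inj _ (lift_perm j' ord_max p')).
  by rewrite -{1}E1 !lift_perm_id.
subst j'.
have Ep : p = p'.
  apply/permP => m; apply: (@lift_inj _ ord_max).
  by rewrite -!(@lift_perm_lift _ j) E1.
subst p'.
have Eb : b = b' by rewrite -(inse_j j b e) E2 inse_j.
subst b'; congr (_, (_, _)); apply/ffunP => m.
by rewrite -(inse_lift j b e) E2 inse_lift.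
Qed.

Lemma sum_insw n (V : nmodType) (F : 'S_n.+1 * {ffun 'I_n.+1 -> bool} -> V) :
  \sum_z F z = \sum_(z : 'S_n * {ffun 'I_n -> bool}) \sum_(j : 'I_n.+1) \sum_(b : bool) F (insw ((j, b), z)).
Proof.
rewrite (sum_bij F (@insw_inj n)); last first.
  by rewrite !card_prod !card_Sn !card_ffun !card_ord card_bool factS expnS; lia.
rewrite (eq_bigr (fun y => F (insw ((y.1.1, y.1.2), (y.2.1, y.2.2))))); last by move=> [[? ?] [? ?]].
rewrite -(pair_big xpredT xpredT (fun a c => F (insw ((a.1, a.2), (c.1, c.2))))) /= exchange_big /=.
apply: eq_bigr => z _.
rewrite -(pair_big xpredT xpredT (fun j b => F (insw ((j, b), (z.1, z.2))))) /=.
by case: z.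
Qed.

Definition Tm (R : comNzRingType) (y : R) n (z : 'S_n * {ffun 'I_n -> bool}) : {poly R} :=
  y%:P ^+ negs z.2 * 'X^(desc 0 (wd z.1 z.2)).

Lemma X_deriv_mon (R : comNzRingType) (Y : {poly R}) (k d : nat) :
  Y^`() = 0 -> 'X * (Y ^+ k * 'X^d)^`() = d%:R * (Y ^+ k * 'X^d).
Proof.
move=> dY; rewrite derivM deriv_exp dY !mul0r mul0rn !mul0r add0r derivXn.
case: d => [|d]; first by rewrite mulr0n !mulr0 mul0r.
by rewrite -mulr_natr /= exprS; ring.
Qed.

Lemma sum_insw_T (R : comNzRingType) (y : R) n z :
  \sum_(j : 'I_n.+1) \sum_(b : bool) Tm y (insw ((j, b), z)) = Op y n (Tm y z).
Proof.
case: z => p e; rewrite /Tm /=.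
under eq_bigr => j _ do rewrite big_bool /= !negs_ins !wd_ins.
set w := wd p e; set k := negs e; set d := desc 0 w.
have hw : size w = n by exact: size_wd.
have bnd := @wd_bound n p e.
set xb := Defs.sval (false, (ord_max : 'I_n.+1)).
set xs := Defs.sval (true, (ord_max : 'I_n.+1)).
have hbig : forall z, z \in 0 :: w -> (z < xb)%R.
  by move=> z /bnd hz; rewrite /xb /Defs.sval /=; lia.
have hsmall : forall z, z \in 0 :: w -> (xs < z)%R.
  by move=> z /bnd hz; rewrite /xs /Defs.sval /=; lia.
set Y := y%:P.
pose A := Y ^+ k + Y ^+ k.+1.
have key : forall j0 : 'I_n,
  Y ^+ (true + k)%N * 'X^(desc 0 (take (widen_ord (leqnSn n) j0) w ++ xs :: drop (widen_ord (leqnSn n) j0) w))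
  + Y ^+ (false + k)%N * 'X^(desc 0 (take (widen_ord (leqnSn n) j0) w ++ xb :: drop (widen_ord (leqnSn n) j0) w))
  = A * (((nat_of_bool (nth 0 w j0 < nth 0 (0 :: w) j0)%R)%:R : {poly R}) * 'X^d
        + ((1 - (nat_of_bool (nth 0 w j0 < nth 0 (0 :: w) j0)%R)%:R) : {poly R}) * 'X^(d.+1)).
  move=> j0; have hj : (j0 <= size w)%N by rewrite hw ltnW.
  have [h1 _] := desc_ins 0 xb hj; have [_ h2] := desc_ins 0 xs hj.
  move: (h1 hbig) (h2 hsmall); rewrite /= hw ltn_ord /= -/d.
  case: (nth 0 w j0 < nth 0 (0 :: w) j0)%R => /= e1 e2.
  - have -> : desc 0 (take j0 w ++ xb :: drop j0 w) = d by lia.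
    have -> : desc 0 (take j0 w ++ xs :: drop j0 w) = d by lia.
    rewrite /A; ring.
  - have -> : desc 0 (take j0 w ++ xb :: drop j0 w) = d.+1 by lia.
    have -> : desc 0 (take j0 w ++ xs :: drop j0 w) = d.+1 by lia.
    rewrite /A; ring.
rewrite big_ord_recr /=.
under eq_bigr => j0 _ do rewrite key.
have hj : (n <= size w)%N by rewrite hw.
have [h1 _] := desc_ins 0 xb hj; have [_ h2] := desc_ins 0 xs hj.
move: (h1 hbig) (h2 hsmall); rewrite /= hw ltnn /= -/d !addn0 => e1 e2.
rewrite e1 e2 -mulr_sumr big_split /= -!big_distrl /= sumrB -natr_sum sumr_const card_ord.
have -> : (\sum_(i < n) ((nth 0 w i < nth 0 (0 :: w) i)%R : nat))%N = d.
  by rewrite /d desc_sum; move: (w) hw => w' <-.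
rewrite /Op X_deriv_mon ?derivC // /A /Y add0n add1n addn1 !exprS; ring.
Qed.


Definition Bp (R : comNzRingType) (y : R) n : {poly R} := \sum_(z : 'S_n * {ffun 'I_n -> bool}) Tm y z.
Definition Gp (R : comNzRingType) (y : R) n : {poly R} := \sum_(s : 'S_n) Wt y (cpks s) (excs s) n.

Lemma Bp_rec (R : comNzRingType) (y : R) n : Bp y n.+1 = Op y n (Bp y n).
Proof. by rewrite /Bp sum_insw Op_sum; apply: eq_bigr => z _; exact: sum_insw_T. Qed.

Lemma Gp_rec (R : comNzRingType) (y : R) n : Gp y n.+1 = Op y n (Gp y n).
Proof. by rewrite /Gp sum_cins Op_sum; apply: eq_bigr => s _; exact: sum_cins_W. Qed.

Lemma Bp0 (R : comNzRingType) (y : R) : Bp y 0 = 1.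
Proof.
rewrite /Bp (eq_bigr (fun _ => 1)); last first.
  move=> [p e] _; rewrite /Tm /negs big_ord0 /= expr0 mul1r.
  by rewrite /wd (size0nil (size_enum_ord 0)) /= expr0.
by rewrite sumr_const card_prod card_Sn card_ffun !card_ord.
Qed.

Lemma Gp0 (R : comNzRingType) (y : R) : Gp y 0 = 1.
Proof.
rewrite /Gp (eq_bigr (fun _ => 1)); last first.
  by move=> s _; rewrite /Wt /cpks /excs !big_ord0 !expr0 !mul1r.
by rewrite sumr_const card_Sn.
Qed.

Lemma BpGp (R : comNzRingType) (y : R) n : Bp y n = Gp y n.
Proof. by elim: n => [|n IH]; rewrite ?Bp0 ?Gp0 // Bp_rec Gp_rec IH. Qed.

Definition mkf n (z : 'S_n * {ffun 'I_n -> bool}) (x : bool * 'I_n) : bool * 'I_n :=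
  (x.1 (+) z.2 x.2, z.1 x.2).

Lemma mkf_inj n z : injective (@mkf n z).
Proof.
move=> [b i] [b' i'] [] /= E1 /perm_inj E2; subst i'.
by move: E1 => /addIb ->.
Qed.

Definition mk n (z : 'S_n * {ffun 'I_n -> bool}) : {perm (bool * 'I_n)} := perm (@mkf_inj n z).

Lemma mk_inj n : injective (@mk n).
Proof.
move=> [p e] [p' e'] E.
have H : forall i, mk (p, e) (false, i) = mk (p', e') (false, i) by move=> i; rewrite E.
congr (_, _).
  by apply/permP => i; move: (H i); rewrite !permE /mkf /= => -[].
by apply/ffunP => i; move: (H i); rewrite !permE /mkf /= => -[].
Qed.

Lemma signed_permsE n : signed_perms n = [set mk z | z in [set: 'S_n * {ffun 'I_n -> bool}]].
Proof.
apply/setP => s; rewrite inE; apply/idP/imsetP.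
  move=> /forallP hs'.
  have hs : forall x, s (sneg x) = sneg (s x) by move=> x; apply/eqP.
  have pinj : injective (fun i => (s (false, i)).2).
    move=> i j /= E.
    case E1: (s (false, i)) => [b1 i1]; case E2: (s (false, j)) => [b2 j2].
    rewrite E1 E2 /= in E; subst j2.
    case: (eqVneq b1 b2) => [eb|ne].
      subst b2; rewrite -E2 in E1.
      by move: (perm_inj E1) => -[].
    have : s (true, j) = s (false, i).
      rewrite -[(true, j)]/(sneg (false, j)) hs E2 E1 /sneg /=.
      by congr (_, _); move: ne; case: (b1); case: (b2).
    by move/perm_inj.
  exists (perm pinj, [ffun i => (s (false, i)).1]); first by rewrite inE.
  apply/permP => -[b i]; rewrite permE /mkf /= permE ffunE.
  case: b => /=.
    rewrite -[(true, i)]/(sneg (false, i)) hs /sneg /=.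
    by case: (s (false, i)) => [b' i'] /=.
  by case: (s (false, i)) => [b' i'].
move=> [z _ ->]; apply/forallP => x; apply/eqP.
by rewrite !permE /mkf /sneg /= addNb.
Qed.

Lemma sigma_at_mk n (z : 'S_n * {ffun 'I_n -> bool}) i : sigma_at (mk z) i = Defs.sval (z.2 i, z.1 i).
Proof. by rewrite /sigma_at permE /mkf /=. Qed.

Lemma negB_mk n (z : 'S_n * {ffun 'I_n -> bool}) : negB (mk z) = negs z.2.
Proof.
rewrite /negB card_set_sum /negs; apply: eq_bigr => i _; rewrite sigma_at_mk /Defs.sval /=.
by case: (z.2 i) => /=; lia.
Qed.

Lemma desB_mk n (z : 'S_n * {ffun 'I_n -> bool}) : desB (mk z) = desc 0 (wd z.1 z.2).
Proof.
rewrite /desB.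
have -> : sword (mk z) = 0 :: wd z.1 z.2.
  by rewrite /sword /wd; congr (_ :: _); apply: eq_map => i; rewrite sigma_at_mk.
rewrite desc_sum.
have := size_wd z.1 z.2; move: (wd z.1 z.2) => w hw.
by move: (w) hw => w' <-.
Qed.

Lemma Bpoly_Bp (R : comNzRingType) n (y t : R) : Bpoly n y t = (Bp y n).[t].
Proof.
rewrite /Bpoly signed_permsE big_imset /=; last by move=> z1 z2 _ _; apply: mk_inj.
rewrite /Bp horner_sum; apply: eq_big => [z|z _]; first by rewrite inE.
by rewrite /Tm hornerM horner_exp hornerC hornerXn negB_mk desB_mk.
Qed.

Lemma Gp_horner (R : comNzRingType) n (y t : R) :
  (Gp y n).[t] = \sum_(s : 'S_n) ((1 + y) ^+ 2 * t) ^+ cpks s * (y + t) ^+ (excs s - cpks s)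
                   * (1 + y * t) ^+ (n - excs s - cpks s).
Proof.
rewrite /Gp horner_sum; apply: eq_bigr => s _.
by rewrite /Wt /pp /qq /rr !hornerE.
Qed.

Lemma part1 (R : fieldType) n (y t : R) : y + t != 0 -> 1 + y * t != 0 ->
  Bpoly n y t = (1 + y * t) ^+ n *
       Pcpkexc n ((1 + y) ^+ 2 * t / ((y + t) * (1 + y * t))) ((y + t) / (1 + y * t)).
Proof.
move=> hq hr.
rewrite Bpoly_Bp BpGp Gp_horner /Pcpkexc mulr_sumr; apply: eq_bigr => s _.
rewrite cpkE excE.
have ha := cpks_le s; have he := cpks_exc s.
move: (cpks s) (excs s) ha he => a e ha he.
set P := (1 + y) ^+ 2 * t; set Q := y + t; set Rr := 1 + y * t.
have -> : Rr ^+ n = Rr ^+ a * Rr ^+ e * Rr ^+ (n - e - a) by rewrite -!exprD; congr (_ ^+ _); lia.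
have -> : (Q / Rr) ^+ e = Q ^+ a * Q ^+ (e - a) / (Rr ^+ e) by rewrite -exprD subnKC // expr_div_n.
rewrite expr_div_n [(Q * Rr) ^+ a]exprMn.
have h1 : Q ^+ a != 0 by rewrite expf_neq0.
have h2 : Rr ^+ a != 0 by rewrite expf_neq0.
have h3 : Rr ^+ e != 0 by rewrite expf_neq0.
move: (P ^+ a) (Q ^+ a) (Q ^+ (e - a)) (Rr ^+ a) (Rr ^+ e) (Rr ^+ (n - e - a)) h1 h2 h3 => A B C D E F h1 h2 h3.
by field; rewrite h1 h2 h3.
Qed.


Lemma part2 (R : rcfType) (n : nat) :
  (forall y t : R, y != 0 -> y != 1 -> t != 0 ->
     0 <= (1 + t) ^+ 2 - 4%:R * y * t ->
     let D := Num.sqrt ((1 + t) ^+ 2 - 4%:R * y * t) in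
     let u := (1 + t ^+ 2 - 2%:R * y * t - (1 - t) * D) / (2%:R * (1 - y) * t) in
     let v := ((1 + t) ^+ 2 - 2%:R * y * t - (1 + t) * D) / (2%:R * y * t) in
     1 + u * v != 0 ->
     Pcpkexc n y t = Bpoly n u v / (1 + u * v) ^+ n).
Proof.
move=> y t hy0 hy1 ht hdisc D u v huv.
have hD : D ^+ 2 = (1 + t) ^+ 2 - 4%:R * y * t by rewrite /D sqr_sqrtr.
have uE : u = (1 + t ^+ 2 - 2%:R * y * t - (1 - t) * D) / (2%:R * (1 - y) * t) by [].
have vE : v = ((1 + t) ^+ 2 - 2%:R * y * t - (1 + t) * D) / (2%:R * y * t) by [].
clearbody D u v.
set N1 := 1 + t ^+ 2 - 2%:R * y * t - (1 - t) * D in uE.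
set N2 := (1 + t) ^+ 2 - 2%:R * y * t - (1 + t) * D in vE.
set d1 := 2%:R * (1 - y) * t in uE.
set d2 := 2%:R * y * t in vE.
have h2 : (2%:R : R) != 0 by rewrite pnatr_eq0.
have h1y : 1 - y != 0 by rewrite subr_eq0 eq_sym.
have hd1 : d1 != 0 by rewrite /d1 !mulf_neq0.
have hd2 : d2 != 0 by rewrite /d2 !mulf_neq0.
have Ea : N1 * d2 + N2 * d1 = t * (d1 * d2 + N1 * N2).
  apply/eqP; rewrite -subr_eq0; apply/eqP.
  have -> : N1 * d2 + N2 * d1 - t * (d1 * d2 + N1 * N2)
     = (t ^+ 3 - t) * (D ^+ 2 - ((1 + t) ^+ 2 - 4%:R * y * t)) by rewrite /N1 /N2 /d1 /d2; ring.
  by rewrite hD subrr mulr0.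
have Eb : y * ((N1 * d2 + N2 * d1) * (d1 * d2 + N1 * N2)) = (d1 + N1) ^+ 2 * (N2 * d2).
  apply/eqP; rewrite -subr_eq0; apply/eqP.
  have -> : y * ((N1 * d2 + N2 * d1) * (d1 * d2 + N1 * N2)) - (d1 + N1) ^+ 2 * (N2 * d2)
     = (4%:R*y*t^+2 - 4%:R*y*t^+2*D + 8%:R*y*t^+3 + 4%:R*y*t^+4 + 4%:R*y*t^+4*D
        - 4%:R*y^+2*t^+2 + 4%:R*y^+2*t^+2*D - 24%:R*y^+2*t^+3 - 4%:R*y^+2*t^+4
        - 4%:R*y^+2*t^+4*D + 16%:R*y^+3*t^+3) * (D ^+ 2 - ((1 + t) ^+ 2 - 4%:R * y * t))
    by rewrite /N1 /N2 /d1 /d2; ring.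
  by rewrite hD subrr mulr0.
have hu : u + v = t * (1 + u * v).
  rewrite uE vE.
  have -> : N1 / d1 + N2 / d2 = (N1 * d2 + N2 * d1) / (d1 * d2) by field; rewrite hd1 hd2.
  have -> : t * (1 + N1 / d1 * (N2 / d2)) = t * (d1 * d2 + N1 * N2) / (d1 * d2) by field; rewrite hd1 hd2.
  by rewrite Ea.
have hy : (1 + u) ^+ 2 * v = y * ((u + v) * (1 + u * v)).
  rewrite uE vE.
  have -> : (1 + N1 / d1) ^+ 2 * (N2 / d2) = (d1 + N1) ^+ 2 * (N2 * d2) / (d1 ^+ 2 * d2 ^+ 2)
    by field; rewrite hd1 hd2.
  have -> : y * ((N1 / d1 + N2 / d2) * (1 + N1 / d1 * (N2 / d2)))
     = y * ((N1 * d2 + N2 * d1) * (d1 * d2 + N1 * N2)) / (d1 ^+ 2 * d2 ^+ 2)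
    by field; rewrite hd1 hd2.
  by rewrite Eb.
have huv0 : u + v != 0 by rewrite hu mulf_neq0.
rewrite (part1 n huv0 huv).
have -> : (1 + u) ^+ 2 * v / ((u + v) * (1 + u * v)) = y.
  by rewrite hy mulfK // mulf_neq0.
have -> : (u + v) / (1 + u * v) = t by rewrite hu mulfK.
by rewrite [_ * Pcpkexc n y t]mulrC mulfK // expf_neq0.
Qed.

Unset Implicit Arguments.

Theorem theorem3p16 (R : rcfType) (n : nat) : (1 <= n)%N ->
  (forall y t : R, y + t != 0 -> 1 + y * t != 0 ->
     Bpoly n y t =
     (1 + y * t) ^+ n *
       Pcpkexc n ((1 + y) ^+ 2 * t / ((y + t) * (1 + y * t)))
                 ((y + t) / (1 + y * t)))
  /\
  (forall y t : R, y != 0 -> y != 1 -> t != 0 ->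
     0 <= (1 + t) ^+ 2 - 4%:R * y * t ->
     let D := Num.sqrt ((1 + t) ^+ 2 - 4%:R * y * t) in
     let u := (1 + t ^+ 2 - 2%:R * y * t - (1 - t) * D) / (2%:R * (1 - y) * t) in
     let v := ((1 + t) ^+ 2 - 2%:R * y * t - (1 + t) * D) / (2%:R * y * t) in
     1 + u * v != 0 ->
     Pcpkexc n y t = Bpoly n u v / (1 + u * v) ^+ n).
Proof.
move=> _; split; first by move=> y t hq hr; exact: part1.
exact: part2.
Qed.
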